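(* Let $l>0$ (wheelbase length), $d\ge 0$ (distance from the rear axle center to the sensor point along the vehicle's longitudinal symmetry axis), and $\gamma_{\max}\in(0,\pi/2)$ (physical maximum steering angle). Let $\kappa_0\in\mathbb{R}$ be a constant path curvature that the vehicle is capable of following, i.e. $|d\,\kappa_0|<1$ and there exists a steering angle $\gamma$ with $|\gamma|\le\gamma_{\max}$ and $\tan\gamma=\dfrac{l\,\kappa_0}{\sqrt{1-d^2\kappa_0^2}}$. Define $\lambda_1=\sqrt{1-d^2\kappa_0^2}$ and $\lambda_2=1+(l^2-d^2)\kappa_0^2$. Then: (1) $|\kappa_0|\le\overline{\kappa}_0$, where $\overline{\kappa}_0=\dfrac{\tan\gamma_{\max}}{\sqrt{l^2+d^2\tan^2\gamma_{\max}}}$; (2) $\lambda_1\in[\underline{\lambda}_1,1]$, where $\underline{\lambda}_1=\dfrac{l}{\sqrt{l^2+d^2\tan^2\gamma_{\max}}}>0$; (3) $\lambda_2>0$.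
   Context: Kinematic bicycle model with no side slip: a vehicle with wheelbase $l$ follows a planar path with its sensor point A located on the longitudinal symmetry axis at distance $d$ in front of the rear axle center. When point A moves exactly along a circle of curvature $\kappa_0$, the required steering angle $\gamma$ satisfies $\tan\gamma = l\kappa_0/\sqrt{1-d^2\kappa_0^2}$. The standing assumption is that road curvatures are within the vehicle's steering capability, i.e. such a $\gamma$ with $|\gamma|\le\gamma_{\max}$ exists. *)

(* Defs.v *)
From Stdlib Require Import Reals.
Open Scope R_scope.

(* Main.v *)
Require Import Defs.
From Stdlib Require Import Reals Lra Psatz.
Open Scope R_scope.

Lemma tan_le_aux a b : - PI / 2 < a -> a <= b -> b < PI / 2 -> tan a <= tan b.
Proof.
  intros h1 h2 h3. destruct (Rle_lt_or_eq_dec a b h2) as [h|h].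
  - left; apply tan_increasing; lra.
  - subst; lra.
Qed.

Theorem claim1 (l d gmax kappa0 : R)
  (hl : 0 < l) (hd : 0 <= d)
  (hg0 : 0 < gmax) (hg1 : gmax < PI / 2)
  (hdk : Rabs (d * kappa0) < 1)
  (hfeas : exists gamma : R,
      Rabs gamma <= gmax /\
      tan gamma = l * kappa0 / sqrt (1 - d ^ 2 * kappa0 ^ 2)) :
  let lambda1 := sqrt (1 - d ^ 2 * kappa0 ^ 2) in
  let lambda2 := 1 + (l ^ 2 - d ^ 2) * kappa0 ^ 2 in
  let kappa_bar := tan gmax / sqrt (l ^ 2 + d ^ 2 * (tan gmax) ^ 2) in
  let lambda1_low := l / sqrt (l ^ 2 + d ^ 2 * (tan gmax) ^ 2) in
  Rabs kappa0 <= kappa_bar /\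
  (0 < lambda1_low /\ lambda1_low <= lambda1 /\ lambda1 <= 1) /\
  0 < lambda2.
Proof.
  intros lambda1 lambda2 kappa_bar lambda1_low.
  destruct hfeas as [g [hg ht]].
  set (T := tan gmax). set (t := tan g).
  assert (hT : 0 < T) by (apply tan_gt_0; lra).
  assert (hPI : 0 < PI) by apply PI_RGT_0.
  assert (hga : - gmax <= g <= gmax) by (unfold Rabs in hg; destruct (Rcase_abs g); lra).
  assert (htT : t <= T) by (apply tan_le_aux; lra).
  assert (htT' : - T <= t).
  { unfold T; rewrite <- tan_neg. apply tan_le_aux; lra. }
  assert (ht2 : t * t <= T * T) by nra.
  assert (hdk2 : (d * kappa0) * (d * kappa0) < 1).
  { apply Rabs_def2 in hdk. nra. }
  set (u := 1 - d ^ 2 * kappa0 ^ 2).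
  assert (hu : 0 < u) by (unfold u; nra).
  assert (hs : 0 < sqrt u) by (apply sqrt_lt_R0; lra).
  assert (hss : sqrt u * sqrt u = u) by (apply sqrt_sqrt; lra).
  assert (hts : t * sqrt u = l * kappa0).
  { unfold t; rewrite ht. unfold Rdiv. rewrite Rmult_assoc, Rinv_l by lra. ring. }
  assert (key : l * l * (kappa0 * kappa0) <= T * T * u).
  { replace (l * l * (kappa0 * kappa0)) with ((t * sqrt u) * (t * sqrt u)) by (rewrite hts; ring).
    replace ((t * sqrt u) * (t * sqrt u)) with ((t*t) * (sqrt u * sqrt u)) by ring.
    rewrite hss. nra. }
  set (L := l ^ 2 + d ^ 2 * T ^ 2).
  assert (hL : 0 < L) by (unfold L; nra).
  assert (hS : 0 < sqrt L) by (apply sqrt_lt_R0; lra).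
  assert (hSS : sqrt L * sqrt L = L) by (apply sqrt_sqrt; lra).
  assert (hk : kappa0 * kappa0 * L <= T * T) by (unfold L, u in *; nra).
  split; [|split; [split; [|split]|]].
  - unfold kappa_bar. fold T. fold L.
    apply Rmult_le_reg_r with (sqrt L); auto.
    unfold Rdiv. rewrite Rmult_assoc, Rinv_l by lra. rewrite Rmult_1_r.
    assert (ha : 0 <= Rabs kappa0) by apply Rabs_pos.
    assert (ha2 : Rabs kappa0 * Rabs kappa0 = kappa0 * kappa0).
    { rewrite <- Rabs_mult. apply Rabs_right. nra. }
    destruct (Rle_or_lt (Rabs kappa0 * sqrt L) T) as [h|h]; auto.
    exfalso. assert (Rabs kappa0 * sqrt L * (Rabs kappa0 * sqrt L) > T * T) by nra.
    replace (Rabs kappa0 * sqrt L * (Rabs kappa0 * sqrt L)) with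
      ((Rabs kappa0 * Rabs kappa0) * (sqrt L * sqrt L)) in H by ring.
    rewrite ha2, hSS in H. lra.
  - unfold lambda1_low. fold T. fold L. apply Rdiv_lt_0_compat; lra.
  - unfold lambda1_low, lambda1. fold T. fold L. fold u.
    apply Rmult_le_reg_r with (sqrt L); auto.
    unfold Rdiv. rewrite Rmult_assoc, Rinv_l by lra. rewrite Rmult_1_r.
    destruct (Rle_or_lt l (sqrt u * sqrt L)) as [h|h]; auto.
    exfalso. assert (l * l > (sqrt u * sqrt L) * (sqrt u * sqrt L)) by (assert (0 < sqrt u * sqrt L) by (apply Rmult_lt_0_compat; lra); nra).
    replace ((sqrt u * sqrt L) * (sqrt u * sqrt L)) with
      ((sqrt u * sqrt u) * (sqrt L * sqrt L)) in H by ring.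
    rewrite hss, hSS in H. unfold u, L in *. nra.
  - unfold lambda1. fold u. rewrite <- sqrt_1. apply sqrt_le_1_alt. unfold u; nra.
  - unfold lambda2. nra.
Qed.
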